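(* Let $\mathcal{G}$ be a DAG and $K$ a set of nodes. Let $p_1$ be a path from $a$ to $b$ and $p_2$ a path from $c$ to $d$, both open given $K$, and suppose they intersect. Let $i$ be the node on $p_1$ closest to $a$ at which $p_1$ and $p_2$ intersect, and let $p=p_1(a,i)\oplus p_2(i,d)$. Then $p$ is closed given $K$ if and only if $K\cap\mathrm{de}(i)=\emptyset$ and $i$ is a collider on $p$.
   Context: A path is a sequence of distinct nodes with consecutive nodes adjacent; for a path $p$ through nodes $u$ and $v$, $p(u,v)$ is its subpath from $u$ to $v$, and $p\oplus q$ is the concatenation of a path ending at a node with a path starting at that node. A node $k$ on a path is a collider if the path has consecutive edges $u\to k\leftarrow w$, otherwise a non-collider. $\mathrm{de}(i)$ is the set of descendants of $i$, i.e. nodes reachable by a directed path from $i$, where by convention $i\in\mathrm{de}(i)$. A path is open given $K$ if every non-collider on it is outside $K$ and every collider on it has a descendant in $K$; otherwise it is closed given $K$. *)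

(* Defs.v *)
From mathcomp Require Import all_boot.
Set Implicit Arguments. Unset Strict Implicit. Unset Printing Implicit Defensive.

Section Graphs.
Variable T : finType.
Variable E : rel T.

Definition is_dag : Prop := forall u v, E u v -> ~~ connect E v u.

Definition adj : rel T := fun u v => E u v || E v u.

Definition is_path_from (a b : T) (p : seq T) : Prop :=
  [/\ p = a :: behead p, last a (behead p) = b, uniq p & path adj a (behead p)].

(* de(i) : descendants of i (reflexive), via a directed path. *)
Definition de (i : T) : {set T} := [set j | connect E i j].

Definition collider (p : seq T) (x : T) : bool :=
  let k := index x p in
  [&& x \in p, 0 < k, k.+1 < size p, E (nth x p k.-1) x & E (nth x p k.+1) x].

Definition open_given (K : {set T}) (p : seq T) : Prop :=
  forall x, x \in p ->
    if collider p x then (K :&: de x) != set0 else x \notin K.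

Definition closed_given (K : {set T}) (p : seq T) : Prop := ~ open_given K p.

End Graphs.

(* Subpaths p(a,u) (prefix ending at u) and p(u,b) (suffix starting at u),
   and concatenation p (+) q of p ending at a node with q starting there. *)
Definition subpath_to (T : eqType) (p : seq T) (u : T) := take (index u p).+1 p.
Definition subpath_from (T : eqType) (p : seq T) (u : T) := drop (index u p) p.
Definition path_cat (T : eqType) (p q : seq T) := p ++ behead q.

(* Main.v *)
Require Import Defs.
From mathcomp Require Import all_boot.
From mathcomp Require Import zify.

Set Implicit Arguments. Unset Strict Implicit. Unset Printing Implicit Defensive.

Lemma nth_size_cat (T : eqType) (x0 : T) (s u : seq T) n :
  nth x0 (s ++ u) (size s + n) = nth x0 u n.
Proof. by rewrite nth_cat ltnNge leq_addr /= addKn. Qed.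

Lemma coll_left (T : finType) (E : rel T) s i t t' x : x \in s ->
  collider E (s ++ i :: t) x = collider E (s ++ i :: t') x.
Proof.
move=> xs; rewrite /collider !index_cat xs !mem_cat xs /= !size_cat /=.
have hk : index x s < size s by rewrite index_mem.
set k := index x s.
have -> : k.+1 < size s + (size t).+1 by lia.
have -> : k.+1 < size s + (size t').+1 by lia.
rewrite !nth_cat (leq_ltn_trans (leq_pred _) hk) /=.
case: ltnP => h //.
by rewrite (_ : k.+1 - size s = 0) //; apply/eqP; rewrite subn_eq0.
Qed.

Lemma coll_right (T : finType) (E : rel T) s s' i t x :
  x \in t -> x \notin s -> x \notin s' -> x != i ->
  collider E (s ++ i :: t) x = collider E (s' ++ i :: t) x.
Proof.
move=> xt xs xs' xi; rewrite /collider !index_cat (negbTE xs) (negbTE xs') /=.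
have ix : (i == x) = false by rewrite eq_sym (negbTE xi).
rewrite ix !mem_cat !inE xt !orbT /= !size_cat /=.
have e1 : forall (u : seq T), (size u + (index x t).+1).-1 = size u + index x t.
  by move=> u; rewrite addnS.
have e2 : forall (u : seq T), (size u + (index x t).+1).+1 = size u + (index x t).+2.
  by move=> u; rewrite !addnS.
rewrite !e1 !e2 !nth_size_cat !addn_gt0 !orbT /= !ltn_add2l.
by [].
Qed.

Lemma coll_mid (T : finType) (E : rel T) s i t : i \notin s ->
  collider E (s ++ i :: t) i =
  [&& 0 < size s, 0 < size t, E (last i s) i & E (head i t) i].
Proof.
move=> iS; rewrite /collider index_cat (negbTE iS) /= eqxx addn0 mem_cat inE eqxx orbT /=.
rewrite size_cat /=.
have -> : ((size s).+1 < size s + (size t).+1) = (0 < size t).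
  by rewrite -[X in X < _]addn1 ltn_add2l ltnS.
case: (posnP (size s)) => hs /=.
  by [].
rewrite nth_cat ltn_predL hs /=.
rewrite nth_last -[(size s).+1]addn1 nth_size_cat /=.
by case: t.
Qed.

Theorem lemma6p3 (T : finType) (E : rel T) (K : {set T})
  (a b c d i : T) (p1 p2 : seq T) :
  is_dag E ->
  is_path_from E a b p1 -> is_path_from E c d p2 ->
  open_given E K p1 -> open_given E K p2 ->
  (* i is the node of p1 closest to a lying on p2 (so p1, p2 intersect) *)
  i \in p1 -> i \in p2 ->
  (forall j, j \in take (index i p1) p1 -> j \notin p2) ->
  closed_given E K (path_cat (subpath_to p1 i) (subpath_from p2 i)) <->
  (K :&: de E i = set0 /\
   collider E (path_cat (subpath_to p1 i) (subpath_from p2 i)) i).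
Proof.
move=> _ [_ _ u1 _] [_ _ u2 _] o1 o2 i1 i2.
move: u1 o1 u2 o2; case/splitPr: i1 => s1 r1; case/splitPr: i2 => s2 t2.
move=> u1 o1 u2 o2.
have is1 : i \notin s1 by move: u1; rewrite cat_uniq /= negb_or => /and3P[_ /andP[]].
have is2 : i \notin s2 by move: u2; rewrite cat_uniq /= negb_or => /and3P[_ /andP[]].
have it2 : i \notin t2 by move: u2; rewrite cat_uniq /= => /and3P[_ _ /andP[]].
have ht2 : forall x, x \in t2 -> x \notin s2.
  move=> x xt; apply/negP=> xs; move: u2; rewrite cat_uniq => /and3P[_ /hasP H _].
  by apply: H; exists x => //; rewrite inE xt orbT.
rewrite /subpath_to /subpath_from !index_cat (negbTE is1) (negbTE is2) /= eqxx !addn0.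
rewrite take_size_cat // drop_size_cat //.
rewrite take_cat ltnNge -addn1 leq_addr /= addKn /path_cat -catA /= take0 => hdis.
set P := s1 ++ i :: t2.
have key : open_given E K P <->
   (if collider E P i then K :&: de E i != set0 else i \notin K).
  split; first by apply; rewrite mem_cat inE eqxx orbT.
  move=> hi x; rewrite mem_cat inE => /or3P[xs|/eqP->//|xt].
    rewrite /P (@coll_left T E s1 i t2 r1 x xs); apply: o1.
    by rewrite mem_cat xs.
  have xs1 : x \notin s1 by apply/negP=> /hdis; rewrite mem_cat inE xt !orbT.
  have xi : x != i by apply/negP=> /eqP ex; move: it2; rewrite -ex xt.
  rewrite /P (@coll_right T E s1 s2 i t2 x xt) //; last exact: ht2.
  by apply: o2; rewrite mem_cat inE xt !orbT.
have c1 : i \in K -> collider E (s1 ++ i :: r1) i.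
  move=> iK; have := o1 i; rewrite mem_cat inE eqxx orbT => /(_ isT).
  by case: (collider _ _ _) => //; rewrite iK.
have c2 : i \in K -> collider E (s2 ++ i :: t2) i.
  move=> iK; have := o2 i; rewrite mem_cat inE eqxx orbT => /(_ isT).
  by case: (collider _ _ _) => //; rewrite iK.
rewrite /closed_given key.
case cP: (collider E P i).
  by split=> [h|[h _]]; [split=> //; apply/eqP; apply/negPn/negP | rewrite h eqxx].
split=> [h|[_ //]]; exfalso.
have iK : i \in K by apply/negPn/negP.
move: (c1 iK) (c2 iK) cP; rewrite /P !coll_mid //.
by case/and4P=> -> _ -> _ /and4P[_ -> _ ->].
Qed.
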